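(* Let $\epsilon > 0$ be a sufficiently small universal constant. For every $G \in \mathcal{G}_{2n}$, the number of graphs in $\mathcal{G}_{2n}$ that are $(1\pm3\epsilon)$-cut sparsifiers of $G$ is at most $2^{n^2/4}$.
   Context: Fix disjoint vertex sets $L,R$ with $|L|=|R|=n$ and a fixed perfect matching $M$ of directed edges from $L$ to $R$. $\mathcal{G}_{2n}$ is the set of all unweighted directed graphs on vertex set $V=L\cup R$ whose set of edges from $L$ to $R$ is exactly $M$, whose edges from $R$ to $L$ form an arbitrary subset of $R\times L$, and which have no other edges. For directed graphs $G,H$ on the same vertex set $V$, $H$ is a $(1\pm\delta)$-cut sparsifier of $G$ if for all $S\subseteq V$, $(1-\delta)w_G(S,V\setminus S)\le w_H(S,V\setminus S)\le(1+\delta)w_G(S,V\setminus S)$, where $w_G(S,T)$ is the total weight (here, number) of edges of $G$ from $S$ to $T$. *)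

(* Defs.v *)
From HB Require Import structures.
From mathcomp Require Import all_boot all_order all_algebra.
Set Implicit Arguments. Unset Strict Implicit. Unset Printing Implicit Defensive.
Import Order.TTheory GRing.Theory Num.Theory.

(* Vertex set V = L ∪ R with L = inl 'I_n, R = inr 'I_n (disjoint, |L|=|R|=n).
   The fixed perfect matching M sends inl i to inr i. *)
Definition vert (n : nat) : finType := ('I_n + 'I_n)%type.

Definition dgraph (n : nat) := {set (vert n * vert n)}.

Definition matching_edge (n : nat) (e : vert n * vert n) : bool :=
  match e with (inl i, inr j) => i == j | _ => false end.

Definition RL_edge (n : nat) (e : vert n * vert n) : bool :=
  match e with (inr _, inl _) => true | _ => false end.

Definition G2n (n : nat) : {set dgraph n} :=
  [set D : dgraph n |
     [forall e : vert n * vert n, (e \in D) ==> (matching_edge e || RL_edge e)]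
     && [forall i : 'I_n, (inl i, inr i) \in D]].

Definition wcut (n : nat) (G : dgraph n) (S T : {set vert n}) : nat :=
  #|[set e in G | (e.1 \in S) && (e.2 \in T)]|.

Definition cut_sparsifier (R : realFieldType) (n : nat) (delta : R)
    (G H : dgraph n) : bool :=
  [forall S : {set vert n},
     ((1 - delta) * (wcut G S (~: S))%:R <= (wcut H S (~: S))%:R)%R
     && ((wcut H S (~: S))%:R <= (1 + delta) * (wcut G S (~: S))%:R)%R].

(* Main.v *)
Require Import Defs.
From HB Require Import structures.
From mathcomp Require Import all_boot all_order all_algebra.
From mathcomp Require Import zify ring lra.
Import Order.TTheory GRing.Theory Num.Theory.

Set Implicit Arguments. Unset Strict Implicit. Unset Printing Implicit Defensive.

Section Cuts.
Variable n : nat.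

Definition Sx (j : 'I_n) (X : {set 'I_n}) : {set vert n} :=
  [set v : vert n | match v with inl i => i \notin X | inr j' => j' == j end].

Definition Mx (j : 'I_n) (X : {set 'I_n}) : {set vert n * vert n} :=
  [set e : vert n * vert n | match e with
     | (inl i, inr i') => (i == i') && (i \notin X) && (i != j) | _ => false end].

Definition Rx (j : 'I_n) (X : {set 'I_n}) (K : dgraph n) : {set vert n * vert n} :=
  [set e : vert n * vert n | match e with
     | (inr j', inl i) => (j' == j) && (i \in X) && (e \in K) | _ => false end].

Lemma G2nP (K : dgraph n) : K \in G2n n ->
  (forall e, e \in K -> matching_edge e || RL_edge e) /\
  (forall i : 'I_n, ((inl i, inr i) : vert n * vert n) \in K).
Proof.
rewrite inE => /andP [/forallP H1 /forallP H2]; split => [e|i]; [exact/implyP/H1|exact: H2].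
Qed.

Lemma cut_eq j X (K : dgraph n) : K \in G2n n ->
  [set e in K | (e.1 \in Sx j X) && (e.2 \in ~: Sx j X)] = Mx j X :|: Rx j X K.
Proof.
move=> /G2nP [H1 H2]; apply/setP => -[[i|i] [i'|i']]; rewrite !inE /=.
- by case E: (_ \in K) => //; have := H1 _ E.
- case: (eqVneq i i') => [<-|ne]; first by rewrite H2 /= orbF.
  case E: (_ \in K) => //; have := H1 _ E; by rewrite /= (negbTE ne).
- rewrite negbK; by case: (_ \in K); case: (i == j); case: (i' \in X).
- by case E: (_ \in K) => //; have := H1 _ E.
Qed.

Lemma wcut_Sx j X (K : dgraph n) : K \in G2n n ->
  wcut K (Sx j X) (~: Sx j X) = #|Mx j X| + #|Rx j X K|.
Proof.
move=> KG; rewrite /wcut cut_eq // -cardsUI.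
have -> : Mx j X :&: Rx j X K = set0.
  by apply/setP => -[[i|i] [i'|i']]; rewrite !inE /= ?andbF.
by rewrite cards0 addn0.
Qed.

Lemma cardM (j : 'I_n) (X : {set 'I_n}) : #|Mx j X| + #|X| <= n.
Proof.
have sub : Mx j X \subset (fun i => (inl i, inr i) : vert n * vert n) @: (~: X).
  apply/subsetP => -[[i|i] [i'|i']]; rewrite !inE //= => /andP[/andP[/eqP <- hX] _].
  by apply/imsetP; exists i; rewrite ?inE.
have h1 := subset_leq_card sub.
have h2 := leq_imset_card (fun i => (inl i, inr i) : vert n * vert n) (~: X).
have h3 := cardsC X. rewrite card_ord in h3.
apply: leq_trans (_ : #|~: X| + #|X| <= n); last by rewrite addnC h3.
by rewrite leq_add2r (leq_trans h1 h2).
Qed.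

Lemma cardR_ge (j : 'I_n) (X : {set 'I_n}) (K : dgraph n) :
  (forall i, i \in X -> ((inr j, inl i) : vert n * vert n) \in K) -> #|X| <= #|Rx j X K|.
Proof.
move=> h.
have inj : injective (fun i : 'I_n => (inr j, inl i) : vert n * vert n) by move=> a b [].
rewrite -(card_imset X inj); apply: subset_leq_card; apply/subsetP => e /imsetP [i iX ->].
by rewrite inE /= eqxx iX h.
Qed.

Lemma rowP (R : realFieldType) (d : R) (G H : dgraph n) (j : 'I_n) :
  G \in G2n n -> H \in G2n n -> (0 <= d)%R -> (64%:R * d <= 1)%R -> cut_sparsifier d G H ->
  64 * #|[set i : 'I_n | ((((inr j, inl i) : vert n * vert n) \in H)
                          && (((inr j, inl i) : vert n * vert n) \notin G))]| <= n.
Proof.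
set P := [set i : 'I_n | _].
move=> GG HG d0 d1 /forallP /(_ (Sx j P)) /andP [_ up].
rewrite !wcut_Sx // in up.
have RG : Rx j P G = set0.
  apply/setP => -[[a|a] [b|b]]; rewrite !inE //.
  by apply/negbTE/negP => /andP [/andP [/eqP -> ]] /andP [_ /negP nG] /nG.
rewrite RG cards0 addn0 in up.
have hr : #|P| <= #|Rx j P H| by apply: cardR_ge => i; rewrite inE => /andP[].
have hm := cardM j P.
have hpr : (#|P|%:R <= #|Rx j P H|%:R :> R)%R by rewrite ler_nat.
have hm0 : (0 <= #|Mx j P|%:R :> R)%R by rewrite ler0n.
have h : (0 <= (1 - 64%:R * d) * #|Mx j P|%:R :> R)%R by apply: mulr_ge0 => //; lra.
rewrite natrD in up.
have : ((64 * #|P|)%:R <= #|Mx j P|%:R :> R)%R by rewrite natrM; lra.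
rewrite ler_nat; lia.
Qed.

Lemma rowQ (R : realFieldType) (d : R) (G H : dgraph n) (j : 'I_n) :
  G \in G2n n -> H \in G2n n -> (0 <= d)%R -> (64%:R * d <= 1)%R -> cut_sparsifier d G H ->
  64 * #|[set i : 'I_n | ((((inr j, inl i) : vert n * vert n) \in G)
                          && (((inr j, inl i) : vert n * vert n) \notin H))]| <= n.
Proof.
set P := [set i : 'I_n | _].
move=> GG HG d0 d1 /forallP /(_ (Sx j P)) /andP [lo _].
rewrite !wcut_Sx // in lo.
have RH : Rx j P H = set0.
  apply/setP => -[[a|a] [b|b]]; rewrite !inE //.
  by apply/negbTE/negP => /andP [/andP [/eqP -> ]] /andP [_ /negP nG] /nG.
rewrite RH cards0 addn0 in lo.
have hr : #|P| <= #|Rx j P G| by apply: cardR_ge => i; rewrite inE => /andP[].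
have hm := cardM j P.
have hpr : (#|P|%:R <= #|Rx j P G|%:R :> R)%R by rewrite ler_nat.
have hm0 : (0 <= #|Mx j P|%:R :> R)%R by rewrite ler0n.
have h : (0 <= (1 - d) * (#|Rx j P G|%:R - #|P|%:R) :> R)%R by apply: mulr_ge0; lra.
have hP0 : (0 <= #|P|%:R :> R)%R by rewrite ler0n.
have h' : (0 <= (1 - 64%:R * d) * (#|Mx j P|%:R + #|P|%:R) :> R)%R
  by apply: mulr_ge0; lra.
rewrite natrD in lo.
have : ((64 * #|P|)%:R <= (#|Mx j P| + #|P|)%:R :> R)%R by rewrite natrM natrD; lra.
rewrite ler_nat. by move=> h2; apply: leq_trans h2 hm.
Qed.

Definition psi (G H : dgraph n) : {set 'I_n * 'I_n} :=
  [set p | ((((inr p.1, inl p.2) : vert n * vert n) \in H)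
           != (((inr p.1, inl p.2) : vert n * vert n) \in G))].

Lemma psi_inj (G : dgraph n) : {in G2n n &, injective (psi G)}.
Proof.
move=> H1 H2 /G2nP [A1 B1] /G2nP [A2 B2] e; apply/setP => -[[a|a] [b|b]].
- case E1: (_ \in H1); first by have := A1 _ E1.
  case E2: (_ \in H2) => //; by have := A2 _ E2.
- case: (eqVneq a b) => [<-|ne]; first by rewrite B1 B2.
  case E1: (_ \in H1); first by have := A1 _ E1; rewrite /= (negbTE ne).
  case E2: (_ \in H2) => //; by have := A2 _ E2; rewrite /= (negbTE ne).
- move/setP: e => /(_ (a, b)); rewrite !inE /=.
  by case: (_ \in H1); case: (_ \in H2); case: (_ \in G).
- case E1: (_ \in H1); first by have := A1 _ E1.
  case E2: (_ \in H2) => //; by have := A2 _ E2.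
Qed.

Lemma card_rows (D : {set 'I_n * 'I_n}) :
  #|D| = \sum_(j < n) #|[set i | (j, i) \in D]|.
Proof.
rewrite -sum1_card big_mkcond /=.
rewrite (_ : \sum_(p : 'I_n * 'I_n) (if p \in D then 1 else 0) =
   \sum_(p | xpredT p.1 && xpredT p.2) (if (p.1, p.2) \in D then 1 else 0)); last first.
  by apply: eq_bigr => -[a b].
rewrite -(pair_big xpredT xpredT (fun a b => if (a, b) \in D then 1 else 0)) /=.
apply: eq_bigr => j _; rewrite -sum1_card [RHS]big_mkcond /=.
by apply: eq_bigr => i _; rewrite inE.
Qed.

Lemma psi_card (R : realFieldType) (d : R) (G H : dgraph n) :
  G \in G2n n -> H \in G2n n -> (0 <= d)%R -> (64%:R * d <= 1)%R -> cut_sparsifier d G H ->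
  32 * #|psi G H| <= n * n.
Proof.
move=> GG HG d0 d1 cs.
rewrite card_rows big_distrr /=.
rewrite -[n in n * _]card_ord -sum_nat_const.
apply: leq_sum => j _.
have hP := rowP j GG HG d0 d1 cs.
have hQ := rowQ j GG HG d0 d1 cs.
set P := [set i | _ && _] in hP.
set Q := [set i | _ && _] in hQ.
have sub : [set i | (j, i) \in psi G H] \subset P :|: Q.
  apply/subsetP => i; rewrite !inE /=.
  by case: (_ \in H); case: (_ \in G).
have := subset_leq_card sub.
have := leq_card_setU P Q. case=> hu _.
move=> h; have h2 := leq_trans h hu; move: h2 hP hQ; move: (#|P|) (#|Q|) => a b; move: (#|[set i | (j, i) \in psi G H]|) => c; lia.
Qed.

End Cuts.

Lemma card_small (U : finType) T :
  #|[set D : {set U} | #|D| <= T]| = \sum_(k < T.+1) 'C(#|U|, k).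
Proof.
elim: T => [|T IH].
  rewrite big_ord_recr big_ord0 /= bin0.
  rewrite (_ : [set D : {set U} | #|D| <= 0] = [set set0]) ?cards1 //.
  by apply/setP => D; rewrite !inE leqn0 cards_eq0.
rewrite big_ord_recr /= -IH -card_draws.
rewrite (_ : [set D : {set U} | #|D| <= T.+1] =
   [set D : {set U} | #|D| <= T] :|: [set D : {set U}| #|D| == T.+1]).
  rewrite -cardsUI (_ : _ :&: _ = set0) ?cards0 ?addn0 //.
  apply/setP => D; rewrite !inE; apply/negbTE/negP => /andP [a /eqP b]; lia.
by apply/setP => D; rewrite !inE leq_eqVlt ltnS orbC.
Qed.

Lemma sum_bin_bound N T m : T <= N -> 0 < m ->
  (\sum_(k < T.+1) 'C(N, k)) * m ^ (N - T) <= (m.+1) ^ N.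
Proof.
move=> TN m0. rewrite -[m.+1]addn1 expnDn big_distrl /=.
rewrite (big_ord_widen N.+1 (fun k => 'C(N,k) * m^(N-T))) ?ltnS //.
rewrite [X in _ <= X](bigID (fun i : 'I_N.+1 => i < T.+1)) /=.
apply: leq_trans (leq_addr _ _). apply: leq_sum => i iT.
rewrite exp1n muln1 leq_mul2l; apply/orP; right.
apply: leq_pexp2l => //; rewrite ltnS in iT; lia.
Qed.

Lemma final s N T : 32*T <= N -> s * 16^(N-T) <= 17^N -> s^4 <= 2^N.
Proof.
move=> TN h.
have h8 : s^8 * 2^(32*(N-T)) <= 2^(33*N).
  have e1 : (s * 16 ^ (N - T)) ^ 8 = s^8 * 2^(32*(N-T)).
    rewrite expnMn -!expnM; congr (_ * _); rewrite (_ : 16 = 2^4) // -!expnM; congr (2 ^ _); lia.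
  have e2 : (17^N)^8 <= 2^(33*N).
    rewrite -expnM (mulnC N 8) !expnM.
    have base : 17^8 <= 2^33 by lia.
    move: base; move: (17^8) (2^33) => a b ab.
    elim: N {TN h e1} => [|k IH]; first by rewrite !expn0.
    by rewrite !expnS leq_mul.
  by rewrite -e1; apply: leq_trans e2; rewrite leq_exp2r.
have : s^8 * 2^(32*(N-T)) <= 2^(2*N) * 2^(32*(N-T)).
  apply: leq_trans h8 _; rewrite -expnD; apply: leq_pexp2l => //; lia.
rewrite leq_pmul2r ?expn_gt0 // => h2.
by rewrite -(leq_exp2r _ _ (isT : 0 < 2)) -!expnM (mulnC N 2).
Qed.

Theorem lemma6 (R : realFieldType) :
  exists eps0 : R, (0 < eps0)%R /\
  forall eps : R, (0 < eps)%R -> (eps <= eps0)%R ->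
  forall (n : nat) (G : dgraph n), G \in G2n n ->
    #|[set H in G2n n | cut_sparsifier (3%:R * eps)%R G H]| ^ 4 <= 2 ^ (n ^ 2).
Proof.
exists (192%:R)^-1%R; split; first by rewrite invr_gt0 ltr0n.
move=> eps e0 e1 n G GG.
set S := [set H in G2n n | _].
have d0 : (0 <= 3%:R * eps :> R)%R by apply: mulr_ge0 => //; lra.
have e1' : (eps * 192%:R <= 1 :> R)%R.
  by rewrite -ler_pdivlMr ?ltr0n // div1r.
have d1 : (64%:R * (3%:R * eps) <= 1 :> R)%R by lra.
set N := n ^ 2.
set T := N %/ 32.
have TN : 32 * T <= N by rewrite mulnC leq_trunc_div.
have sub : psi G @: S \subset [set D : {set 'I_n * 'I_n} | #|D| <= T].
  apply/subsetP => D /imsetP [H HS ->]; move: HS; rewrite /S !inE => /andP [HG cs].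
  rewrite leq_divRL // mulnC /N expnS expn1.
  by apply: (psi_card GG _ d0 d1 cs); rewrite inE.
have cS : #|S| <= \sum_(k < T.+1) 'C(N, k).
  have inj : {in S &, injective (psi G)}.
    move=> a b aS bS; apply: psi_inj; [move: aS | move: bS]; by rewrite /S inE => /andP[].
  rewrite -(card_in_imset inj); apply: leq_trans (subset_leq_card sub) _.
  by rewrite card_small card_prod card_ord /N expnS expn1.
have TN' : T <= N by apply: leq_trans (leq_pmull _ _) TN.
have hb := @sum_bin_bound N T 16 TN' isT.
apply: (final TN); apply: leq_trans hb; exact: leq_mul cS (leqnn _).
Qed.
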